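(* For all integers $n\ge k\ge 2$ and $r\ge 0$, \[ \mathsf{opt}_{\operatorname{bandit}}^{\operatorname{det}}(n,k,r)\ge k(r+1)-1. \]
   Context: Prediction with expert advice: $\mathcal{Y}=\{1,\dots,k\}$, $\mathcal{X}=[k]^n$, experts $h_i(x)=x_i$, $i=1,\dots,n$. $\mathcal{P}_r$ is the set of finite sequences of examples in $\mathcal{X}\times\mathcal{Y}$ on which some $h_i$ errs on at most $r$ examples. Bandit feedback: each round the adversary presents $x_t$, a deterministic learner predicts $\hat y_t$ as a function of past observations and $x_t$, and learns only whether $\hat y_t$ equals the true label $y_t$. $\mathsf{opt}_{\operatorname{bandit}}^{\operatorname{det}}(n,k,r)$ is the infimum over deterministic learners of the supremum over $S\in\mathcal{P}_r$ of the number of mistakes ($\hat y_t\ne y_t$). *)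

(* Defs.v *)
From mathcomp Require Import all_boot.
Set Implicit Arguments. Unset Strict Implicit. Unset Printing Implicit Defensive.

(* Labels Y = {1,..,k} are represented by 'I_k = {0,..,k-1}.
   Instances X = [k]^n are functions 'I_n -> 'I_k; expert h_i(x) = x i. *)
Definition instance (n k : nat) : Type := {ffun 'I_n -> 'I_k}.

Definition expert (n k : nat) (i : 'I_n) (x : instance n k) : 'I_k := x i.

(* A deterministic bandit learner: given the history of past observations
   (instance x_s, own prediction yhat_s, feedback bit [yhat_s == y_s]) in
   chronological order, and the current instance x_t, it outputs a label. *)
Definition learner (n k : nat) : Type :=
  seq (instance n k * 'I_k * bool) -> instance n k -> 'I_k.

Fixpoint mistakes_from (n k : nat) (L : learner n k)
    (hist : seq (instance n k * 'I_k * bool)) (S : seq (instance n k * 'I_k))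
    : nat :=
  match S with
  | [::] => 0
  | (x, y) :: S' =>
      let yh := L hist x in
      (yh != y) + mistakes_from L (rcons hist (x, yh, yh == y)) S'
  end.

Definition mistakes (n k : nat) (L : learner n k) (S : seq (instance n k * 'I_k))
  : nat := mistakes_from L [::] S.

Definition expert_errors (n k : nat) (i : 'I_n) (S : seq (instance n k * 'I_k))
  : nat := count (fun p => expert i p.1 != p.2) S.

Definition in_P (n k r : nat) (S : seq (instance n k * 'I_k)) : Prop :=
  exists i : 'I_n, expert_errors i S <= r.

(* opt^det_bandit(n,k,r) >= m  <->  for every deterministic learner there is
   S in P_r on which it makes at least m mistakes (inf over learners of sup
   over S, values in nat U {oo}). *)
Definition opt_bandit_det_ge (n k r m : nat) : Prop :=
  forall L : learner n k, exists S : seq (instance n k * 'I_k),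
    in_P r S /\ m <= mistakes L S.

(* Main.v *)
Require Import Defs.
From mathcomp Require Import all_boot.
From mathcomp Require Import zify.
Set Implicit Arguments.

Section Aux.
Variables (n k : nat) (L : learner n k) (x : instance n k).

Fixpoint gen (hist : seq (instance n k * 'I_k * bool)) (m : nat) : seq 'I_k :=
  match m with
  | 0 => [::]
  | m'.+1 => let yh := L hist x in yh :: gen (rcons hist (x, yh, false)) m'
  end.

Lemma size_gen hist m : size (gen hist m) = m.
Proof. by elim: m hist => [|m IH] hist //=; rewrite IH. Qed.

Lemma mistakes_gen (f : 'I_k -> 'I_k) (hf : forall y, f y != y) hist m :
  mistakes_from L hist [seq (x, f y) | y <- gen hist m] = m.
Proof.
elim: m hist => [|m IH] hist //=.
have h := hf (L hist x).
rewrite eq_sym h /= (negbTE h) IH. by [].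
Qed.
End Aux.

Lemma sum_count_mem k (s : seq 'I_k) : \sum_(j < k) count_mem j s = size s.
Proof.
elim: s => [|a s IH] /=; first by rewrite big1.
rewrite big_split /= IH -add1n; congr (_ + _).
rewrite (bigD1 a) //= eqxx big1 // => j hj; by rewrite eq_sym (negbTE hj).
Qed.

Lemma pigeon k r (s : seq 'I_k) : size s = k * (r + 1) - 1 -> 0 < k ->
  exists j : 'I_k, count_mem j s <= r.
Proof.
move=> hs hk.
case: (boolP [exists j : 'I_k, count_mem j s <= r]) => [/existsP[j hj]|h].
  by exists j.
exfalso.
have : \sum_(j < k) (r + 1) <= \sum_(j < k) count_mem j s.
  apply: leq_sum => j _. move/existsPn: h => /(_ j). by rewrite -ltnNge addn1.
rewrite sum_count_mem hs sum_nat_const card_ord.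
move=> h'; have : 0 < k * (r + 1) by rewrite muln_gt0 hk addn1.
move: h'; lia.
Qed.

Theorem lemma4p6 (n k r : nat) (hk : 2 <= k) (hkn : k <= n) :
  opt_bandit_det_ge n k r (k * (r + 1) - 1).
Proof.
case: k hk hkn => [|[|k]] // _ hkn L.
pose x : instance n k.+2 := [ffun i : 'I_n => inord (val i)].
pose s := gen L x [::] (k.+2 * (r + 1) - 1).
have [j hj] := @pigeon k.+2 r s (size_gen _ _ _ _) (erefl _).
pose o : 'I_k.+2 := if j == ord0 then inord 1 else ord0.
have ho : o != j.
  rewrite /o; case: (j =P ord0) => [->|hj0] //.
  by apply/eqP => /(congr1 val); rewrite /= inordK.
  by apply/eqP => h; apply: hj0; rewrite -h.
pose f := fun y : 'I_k.+2 => if y == j then o else j.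
have hf : forall y, f y != y.
  move=> y; rewrite /f; case: (y =P j) => [->|hy] //.
  by apply/eqP => h; apply: hy; rewrite h.
exists [seq (x, f y) | y <- s]; split; last by rewrite /mistakes mistakes_gen.
exists (widen_ord hkn j).
rewrite /expert_errors count_map /=.
apply: leq_trans hj; rewrite leq_eqVlt; apply/orP; left; apply/eqP.
apply: eq_count => y /=.
rewrite /expert ffunE /= inord_val /f.
case: (y =P j) => [hy|hy].
  by rewrite eq_sym ho.
by rewrite eqxx.
Qed.
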